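(* Let $V_1,V_2$ be Orlicz functions with $V_1(x)/V_2(x)\to\infty$ as $|x|\to\infty$. Let $\widetilde R:=\sup\{m_{V_2}(\nu):\nu\in\mathscr M_1(\mathbb R),\ m_{V_1}(\nu)\le1\}$ and let $R\in[\widetilde R,\infty)$. Let $X_1^{n,V_1}$ be uniformly distributed on $\mathbb B_1^{n,V_1}$. Then for each fixed $k\in\mathbb N$, $$\lim_{\epsilon\to0}\lim_{n\to\infty}d_w\Big(P\big[(X_1^{n,V_1}(1),\dots,X_1^{n,V_1}(k))\in\cdot\,\big|\,X_1^{n,V_1}\in\mathbb B^{n,V_2}_{R+\epsilon}\big],\ \lambda^{(n,k)}_{1,V_1}\Big)=0,$$ where $d_w$ is a metric inducing weak convergence of probability measures on $\mathbb R^k$ and $\lambda^{(n,k)}_{1,V_1}$ is the distribution of the first $k$ coordinates of a random vector uniformly distributed on $\mathbb B_1^{n,V_1}$.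
   Context: An Orlicz function is a convex, symmetric function $V:\mathbb R\to[0,\infty)$ with $V(0)=0$ and $V(x)>0$ for $x\ne0$. $\mathbb B_R^{n,V}:=\{x\in\mathbb R^n:\sum_kV(x_k)\le Rn\}$. $m_V(\nu):=\int V\,d\nu$. *)

(* Defs.v *)
From HB Require Import structures.
From mathcomp Require Import all_boot all_order all_algebra.
From mathcomp Require Import all_classical all_reals all_analysis.
Set Implicit Arguments. Unset Strict Implicit. Unset Printing Implicit Defensive.
Import Order.TTheory GRing.Theory Num.Theory.
Import numFieldNormedType.Exports.
Local Open Scope classical_set_scope.
Local Open Scope ring_scope.

Section Defs.
Variable R : realType.

Definition orlicz (V : R -> R) : Prop :=
  (forall x, 0 <= V x) /\
  (forall x y t, 0 <= t -> t <= 1 ->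
     V (t * x + (1 - t) * y) <= t * V x + (1 - t) * V y) /\
  (forall x, V (- x) = V x) /\
  V 0 = 0 /\
  (forall x, x != 0 -> 0 < V x).

(* Points of R^n are represented as sequences of length n; coordinate i (1-based
   in the paper) is nth 0 x (i-1). *)
Definition orlicz_ball (n : nat) (V : R -> R) (r : R) : set (seq R) :=
  [set x | size x = n /\ \sum_(v <- x) V v <= r * n%:R].

(* n-dimensional Lebesgue integral, as the iterated one-dimensional Lebesgue
   integral over R^n (x = x_1 :: x_2 :: ... :: x_n). *)
Fixpoint iter_int (n : nat) (f : seq R -> \bar R) : \bar R :=
  match n with
  | 0 => f [::]
  | m.+1 => (\int[lebesgue_measure]_(t in setT) iter_int m (fun s => f (t :: s)))%E
  end.

Definition firstk (k : nat) (x : seq R) : 'rV[R]_k := \row_(i < k) nth 0 x i.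

(* E[ f(X(1),...,X(k)) ] for X uniformly distributed on the set A of R^n *)
Definition unif_expect (n k : nat) (A : set (seq R)) (f : 'rV[R]_k -> R) : R :=
  fine (iter_int n (fun x => (\1_A x * f (firstk k x))%:E)) /
  fine (iter_int n (fun x => (\1_A x)%:E)).

Definition BL1 (k : nat) : set ('rV[R]_k -> R) :=
  [set f | exists a L : R, [/\ 0 <= a, 0 <= L, a + L <= 1,
     forall x, `|f x| <= a &
     forall x y, `|f x - f y| <= L * `|x - y|]].

(* bounded-Lipschitz (Dudley) distance between the laws of the first k
   coordinates of uniform vectors on A and on B *)
Definition dBL_unif (n k : nat) (A B : set (seq R)) : \bar R :=
  ereal_sup [set (`|unif_expect n A f - unif_expect n B f|)%:E | f in @BL1 k].

Definition mV (V : R -> R) (nu : probability R R) : \bar R :=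
  (\int[nu]_x (V x)%:E)%E.

Definition Rtilde (V1 V2 : R -> R) : \bar R :=
  ereal_sup [set mV V2 nu | nu in [set nu : probability R R | (mV V1 nu <= 1)%E]].

End Defs.

(* Main.v *)
Require Import Defs.
From HB Require Import structures.
From mathcomp Require Import all_boot all_order all_algebra.
From mathcomp Require Import all_classical all_reals all_analysis.
From mathcomp Require Import measurable_realfun.
Import Order.TTheory GRing.Theory Num.Theory.
Import numFieldNormedType.Exports.
Local Open Scope classical_set_scope.
Local Open Scope ring_scope.
Lemma orlicz_mono (R : realType) (V : R -> R) : orlicz V ->
  forall x y, 0 <= x -> x <= y -> V x <= V y.
Proof.
move=> [V0 [Vc [Vs [V00 Vp]]]] x y x0 xy.
have [y0|yp] := eqVneq y 0.
  have -> : x = 0 by apply/eqP; rewrite eq_le x0 -y0 xy.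
  by rewrite y0.
have ypos : 0 < y by rewrite lt_neqAle eq_sym yp (le_trans x0 xy).
have t0 : 0 <= x / y by rewrite divr_ge0 // ltW.
have t1 : x / y <= 1 by rewrite ler_pdivrMr // mul1r.
have := Vc y 0 (x / y) t0 t1.
rewrite mulr0 addr0 V00 mulr0 addr0 divfK ?gt_eqF//.
move=> h; apply: (le_trans h).
by rewrite -[leRHS]mul1r ler_wpM2r.
Qed.

Lemma orlicz_meas (R : realType) (V : R -> R) : orlicz V ->
  measurable_fun [set: R] (EFin \o V).
Proof.
move=> oV; have [V0 [_ [Vs [V00 _]]]] := oV.
apply/measurable_EFinP.
pose g := fun y : R => V (Num.max y 0).
have gnd : {homo g : a b / a <= b}.
  move=> a b ab; rewrite /g; apply: orlicz_mono => //.
    by rewrite le_max lexx orbT.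
  by rewrite ge_max !le_max ab lexx !orbT.
have -> : V = g \o (@Num.norm _ R).
  apply/funext => x; rewrite /g /= max_l //.
  by case: (ler0P x) => _ //; rewrite ?Vs.
apply: measurableT_comp => //.
exact: nondecreasing_measurable.
Qed.

Section Emp.
Variable R : realType.
Variable x : seq R.
Hypothesis x0 : (0 < size x)%N.

Let n := size x.
Let mu := msum (fun i => @dirac _ R (nth 0 x i) R) n.
Definition empP : probability R R := mnormalize mu (@dirac _ R 0 R).

Let c : {nonneg R} := ((n%:R)^-1)%:nng.

Let mu_setT : mu setT = n%:R%:E.
Proof.
rewrite /mu /msum /=.
under eq_bigr do rewrite diracT.
by rewrite sumEFin big_const_ord /= -[X in X%:E]/(iter n (+%R 1) 0) iter_addr addr0.
Qed.

Lemma empPE : (empP : set R -> \bar R) = mscale c mu.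
Proof.
apply/funext => A; rewrite /empP /=; unfold mnormalize; simpl.
set e := msum _ _ _.
have -> : e = n%:R%:E by exact: mu_setT.
have n0 : n%:R != 0 :> R by rewrite pnatr_eq0 -lt0n.
rewrite eqe (negbTE n0) /= /mscale /= muleC.
done.
Qed.

Lemma empP_mV (V : R -> R) : orlicz V ->
  mV V empP = ((n%:R)^-1 * \sum_(v <- x) V v)%:E.
Proof.
move=> oV; have mV' := @orlicz_meas _ _ oV.
have V0 : forall t, (0 <= (V t)%:E)%E by move=> t; rewrite lee_fin; case: oV.
rewrite /mV empPE ge0_integral_mscale //= ge0_integral_measure_sum //.
rewrite (eq_bigr (fun i : 'I_n => (V (nth 0 x i))%:E)); last first.
  move=> i _; rewrite (@integral_dirac _ _ _ _ setT measurableT (EFin \o V) mV').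
  by rewrite diracT mul1e.
rewrite sumEFin -EFinM; congr (_ * _)%:E.
by rewrite (big_nth 0) big_mkord.
Qed.

End Emp.

Lemma ball_incl (R : realType) (V1 V2 : R -> R) (r : R) :
  orlicz V1 -> orlicz V2 -> (Rtilde V1 V2 <= r%:E)%E ->
  forall n eps, 0 <= eps ->
  orlicz_ball n V1 1 `<=` orlicz_ball n V2 (r + eps).
Proof.
move=> o1 o2 hR n eps e0 x [sx hx]; split => //; subst n.
have [sx0|xpos] := posnP (size x).
  by rewrite sx0; move/size0nil: sx0 => ->; rewrite big_nil /= mulr0.
have h1 := @empP_mV _ _ xpos _ o1.
have h2 := @empP_mV _ _ xpos _ o2.
have np : 0 < (size x)%:R :> R by rewrite ltr0n.
have hP : (mV V2 (@empP _ x) <= Rtilde V1 V2)%E.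
  apply: ereal_sup_ubound; exists (@empP _ x) => //=.
  rewrite h1 lee_fin ler_pdivrMl // mulr1 -[leRHS]mul1r; exact: hx.
have := le_trans hP hR; rewrite h2 lee_fin.
rewrite ler_pdivrMl // => h.
apply: (le_trans h); rewrite mulrC.
by rewrite ler_wpM2r ?ler0n // lerDl.
Qed.

Theorem mainTheorem8 (R : realType) (V1 V2 : R -> R) (r : R) (k : nat) :
  orlicz V1 -> orlicz V2 ->
  (forall M : R, exists A : R, forall x : R, A < `|x| -> M < V1 x / V2 x) ->
  (Rtilde V1 V2 <= r%:E)%E ->
  exists L : R -> \bar R,
    (\forall eps \near 0^'+,
        (fun n : nat => dBL_unif n k
            (orlicz_ball n V1 1 `&` orlicz_ball n V2 (r + eps))
            (orlicz_ball n V1 1)) @ \oo --> L eps) /\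
    (L eps @[eps --> 0^'+] --> 0%E).
Proof.
move=> o1 o2 _ hR; exists (fun _ => 0%E); split; last exact: cvg_cst.
near=> eps.
have e0 : 0 < eps by near: eps; exact: nbhs_right_gt.
rewrite (_ : (fun n : nat => _) = fun _ => 0%E); first exact: cvg_cst.
apply/funext => n; rewrite setIidl; last exact: ball_incl (ltW e0).
rewrite /dBL_unif.
rewrite (_ : [set _ | f in _] = [set 0%E]); first exact: ereal_sup1.
apply/seteqP; split.
  by move=> _ [f _ <-]; rewrite subrr normr0.
move=> _ ->; exists (fun _ => 0); last by rewrite subrr normr0.
exists 0, 0; split; rewrite ?addr0 ?lexx ?ler01 // => *;
  by rewrite ?subrr normr0 ?mul0r.
Unshelve. all: by end_near.
Qed.
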